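(* Let $\mathcal{S}\subseteq\mathbb{R}^n$ and consider a system $\dot x=f(x)$, $y=h(x)$ with $h$ continuous, such that $\mathcal{S}$ is forward invariant, every solution starting in $\mathcal{S}$ is defined for all $t\ge0$, and every such solution converges as $t\to\infty$ to an equilibrium (a point $\bar x\in\mathcal{S}$ with $f(\bar x)=0$). Let $E$ denote the set of equilibria in $\mathcal{S}$. Then the system is detectable on $\mathcal{S}$ if and only if: for all $\bar x,\bar z\in E$, $h(\bar x)=h(\bar z)$ implies $\bar x=\bar z$.
   Context: The system is called detectable (on $\mathcal{S}$) if for every two trajectories $x(\cdot)$ and $z(\cdot)$ in $\mathcal{S}$ defined for all $t\ge 0$, $h(x(t))\equiv h(z(t))$ implies $|x(t)-z(t)|\to0$ as $t\to\infty$. Here $|\cdot|$ is the Euclidean norm. *)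

(* Defs.v *)
From HB Require Import structures.
From mathcomp Require Import all_boot all_order all_algebra.
From mathcomp Require Import all_classical all_reals all_analysis.
Set Implicit Arguments. Unset Strict Implicit. Unset Printing Implicit Defensive.
Import Order.TTheory GRing.Theory Num.Theory.
Import numFieldNormedType.Exports.
Local Open Scope classical_set_scope.
Local Open Scope ring_scope.

Section Defs.
Variables (R : realType) (n p : nat).

Definition enorm (v : 'rV[R]_n) : R := Num.sqrt (\sum_(i < n) v ord0 i ^+ 2).

Definition is_solution (f : 'rV[R]_n -> 'rV[R]_n) (x : R -> 'rV[R]_n) : Prop :=
  {within `[0%R, +oo[, continuous x} /\
  (forall t : R, 0 < t -> is_derive t 1 x (f (x t))).

Definition trajectory_in (S : set 'rV[R]_n) (f : 'rV[R]_n -> 'rV[R]_n)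
  (x : R -> 'rV[R]_n) : Prop :=
  is_solution f x /\ (forall t : R, 0 <= t -> S (x t)).

Definition forward_invariant (S : set 'rV[R]_n) (f : 'rV[R]_n -> 'rV[R]_n) : Prop :=
  forall x, is_solution f x -> S (x 0) -> forall t : R, 0 <= t -> S (x t).

Definition equilibria (S : set 'rV[R]_n) (f : 'rV[R]_n -> 'rV[R]_n) : set 'rV[R]_n :=
  [set xb | S xb /\ f xb = 0].

Definition detectable (S : set 'rV[R]_n) (f : 'rV[R]_n -> 'rV[R]_n)
  (h : 'rV[R]_n -> 'rV[R]_p) : Prop :=
  forall x z : R -> 'rV[R]_n, trajectory_in S f x -> trajectory_in S f z ->
    (forall t : R, 0 <= t -> h (x t) = h (z t)) ->
    enorm (x t - z t) @[t --> +oo] --> (0 : R).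

End Defs.

(* Main.v *)
Require Import Defs.
From HB Require Import structures.
From mathcomp Require Import all_boot all_order all_algebra.
From mathcomp Require Import all_classical all_reals all_analysis.
Import Order.TTheory GRing.Theory Num.Theory.
Import numFieldNormedType.Exports.
Local Open Scope classical_set_scope.
Local Open Scope ring_scope.

Lemma enorm_cont (R : realType) n : continuous (@enorm R n).
Proof.
move=> v; rewrite /enorm.
apply: (@continuous_comp _ _ _ (fun w : 'rV[R]_n => \sum_(i < n) w ord0 i ^+ 2) Num.sqrt); last exact: sqrt_continuous.
apply: (@continuous_big _ _ +%R 0 xpredT _ _ _ (fun i (w : 'rV[R]_n) => w ord0 i ^+ 2)) => //.
  exact: add_continuous.
move=> i _ w.
apply: (@continuous_comp _ _ _ (fun w : 'rV[R]_n => w ord0 i) (fun r : R => r ^+ 2)).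
  exact: coord_continuous.
exact: exprn_continuous.
Qed.

Lemma enorm_eq0 (R : realType) n (v : 'rV[R]_n) : enorm v = 0 -> v = 0.
Proof.
rewrite /enorm => /eqP; rewrite sqrtr_eq0 => H.
have H0 : \sum_(i < n) v ord0 i ^+ 2 = 0.
  apply/eqP; rewrite eq_le H /=; apply: sumr_ge0 => i _; exact: sqr_ge0.
apply/rowP => i; rewrite mxE; apply/eqP; rewrite -sqrf_eq0.
move/eqP: H0; rewrite psumr_eq0; last by move=> j _; exact: sqr_ge0.
by move/allP/(_ i (mem_index_enum _)) => /implyP; apply.
Qed.

Lemma enorm0 (R : realType) n : @enorm R n 0 = 0.
Proof.
rewrite /enorm (eq_bigr (fun _ => 0)); first by rewrite big1 // sqrtr0.
by move=> i _; rewrite mxE expr0n.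
Qed.

Lemma cst_solution (R : realType) n (f : 'rV[R]_n -> 'rV[R]_n) xb :
  f xb = 0 -> is_solution f (fun _ : R => xb).
Proof.
move=> fx; split.
  apply: continuous_subspaceT => t; exact: cvg_cst.
by move=> t _; rewrite fx; exact: is_derive_cst.
Qed.

Theorem lemma1p4 (R : realType) (n p : nat) (S : set 'rV[R]_n)
  (f : 'rV[R]_n -> 'rV[R]_n) (h : 'rV[R]_n -> 'rV[R]_p)
  (hcont : continuous h)
  (Sinv : forward_invariant S f)
  (conv : forall x : R -> 'rV[R]_n, is_solution f x -> S (x 0) ->
     exists2 xb, equilibria S f xb & x t @[t --> +oo] --> xb) :
  detectable S f h <->
  (forall xb zb, equilibria S f xb -> equilibria S f zb -> h xb = h zb -> xb = zb).
Proof.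
split.
  move=> D xb zb [Sx fx] [Sz fz] hxz.
  have := D (fun _ => xb) (fun _ => zb).
  have /[swap]/[apply] : trajectory_in S f (fun _ => xb) by split => //; exact: cst_solution.
  have /[swap]/[apply] : trajectory_in S f (fun _ => zb) by split => //; exact: cst_solution.
  move=> /(_ (fun _ _ => hxz)) H.
  have E : enorm (xb - zb) = 0 by apply: cvg_unique (cvg_cst _) H.
  by apply/eqP; rewrite -subr_eq0; apply/eqP; exact: enorm_eq0 E.
move=> U x z [sx Sx] [sz Sz] hxz.
have [xb Exb cx] := conv x sx (Sx 0 (lexx _)).
have [zb Ezb cz] := conv z sz (Sz 0 (lexx _)).
have hx : h (x t) @[t --> +oo] --> h xb := cvg_comp _ _ cx (hcont xb).
have hz : h (z t) @[t --> +oo] --> h zb := cvg_comp _ _ cz (hcont zb).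
have hz' : h (x t) @[t --> +oo] --> h zb.
  apply: cvg_trans hz; apply: near_eq_cvg; near=> t; apply/esym/hxz.
  by near: t; exists 0; split => // y /ltW.
have exz : xb = zb by apply: U => //; exact: cvg_unique hx hz'.
subst zb.
have : (x t - z t) @[t --> +oo] --> xb - xb := cvgB cx cz.
rewrite subrr => c0.
rewrite -(enorm0 R n).
apply: (cvg_comp (fun t => x t - z t) (@enorm R n)); [exact: c0 | exact: enorm_cont].
Unshelve. all: by end_near.
Qed.
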